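(* Let $\mathfrak R=(\mathcal B,\mathcal S,\pi)$ be a return risk measurement regime such that $\mathcal S$ is a cone and $\pi$ is positively homogeneous, and let $\mathcal S_1=\{Z\in\mathcal S:\pi(Z)=1\}$. Then for all $X\in\mathcal C$, $$\eta_{\mathfrak R}(X)=\inf\{\lambda>0: X/\lambda\in\mathcal B\cdot\mathcal S_1\}.$$ Moreover, $\mathcal B\cdot\mathcal S_1$ is monotone in the sense that for all $X\in\mathcal B\cdot\mathcal S_1$ and all $Y\in\mathcal C$ with $Y\le X$ a.s., we have $Y\in\mathcal B\cdot\mathcal S_1$.
   Context: Let $(\Omega,\mathcal F,P)$ be a probability space, $L^0$ the space of real random variables with the a.s. order, $L^0_{++}=\{X\in L^0:X>0\text{ a.s.}\}$. For $\mathcal A,\mathcal D\subset L^0_{++}$ write $\mathcal A\cdot\mathcal D=\{AD:A\in\mathcal A,D\in\mathcal D\}$ and $\frac{\mathcal A}{\mathcal D}=\{AD^{-1}:A\in\mathcal A,D\in\mathcal D\}$. Setting: nonempty sets $\mathcal C,\mathcal S,\mathcal K\subset L^0_{++}$ (model set, security set, set of relative losses) with $\frac{\mathcal C}{\mathcal S}\subset\mathcal K$; a pricing map $\pi\colon\mathcal S\to(0,\infty)$; a relative acceptance set $\mathcal B$, i.e. a nonempty proper subset of $\mathcal K$ such that $X\in\mathcal B$, $Y\in\mathcal K$, $Y\le X$ imply $Y\in\mathcal B$. $\mathfrak R=(\mathcal B,\mathcal S,\pi)$ is a return risk measurement regime, and $\eta_{\mathfrak R}(X)=\inf\{\pi(Z):Z\in\mathcal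 S,\ X/Z\in\mathcal B\}$, $X\in\mathcal C$ ($\inf\emptyset=\infty$), is the MARRM. A set $\mathcal A$ is a cone if $\lambda\mathcal A\subset\mathcal A$ for all $\lambda>0$; $\pi$ is positively homogeneous if $\pi(\lambda Z)=\lambda\pi(Z)$ for $\lambda>0$, $Z\in\mathcal S$. *)

(* Defs.v *)
From HB Require Import structures.
From mathcomp Require Import all_boot all_order all_algebra.
From mathcomp Require Import all_classical all_reals all_analysis.
Set Implicit Arguments. Unset Strict Implicit. Unset Printing Implicit Defensive.
Import Order.TTheory GRing.Theory Num.Theory.
Local Open Scope classical_set_scope.
Local Open Scope ring_scope.

(* Random variables are represented by functions Omega -> R; an element of
   L^0_{++} is represented by a measurable representative that is strictly
   positive everywhere (every class in L^0_{++} has such a representative). *)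

Definition L0pp d (Omega : measurableType d) (R : realType) : set (Omega -> R) :=
  [set X : Omega -> R | measurable_fun setT X /\ forall w, 0 < X w].

Definition ale d (Omega : measurableType d) (R : realType)
  (P : probability Omega R) (Y X : Omega -> R) : Prop :=
  {ae P, forall w, Y w <= X w}.

Definition setmul (Omega : Type) (R : realType) (A D : set (Omega -> R)) :
  set (Omega -> R) :=
  [set X | exists2 a, A a & exists2 b, D b & X = (fun w => a w * b w)].

Definition setdiv (Omega : Type) (R : realType) (A D : set (Omega -> R)) :
  set (Omega -> R) :=
  [set X | exists2 a, A a & exists2 b, D b & X = (fun w => a w / b w)].

Definition relative_acceptance_set d (Omega : measurableType d) (R : realType)
  (P : probability Omega R) (K B : set (Omega -> R)) : Prop :=
  B !=set0 /\ B `<=` K /\ B != K /\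
  (forall X Y, B X -> K Y -> ale P Y X -> B Y).

Definition is_cone (Omega : Type) (R : realType) (A : set (Omega -> R)) : Prop :=
  forall (l : R) Z, 0 < l -> A Z -> A (fun w => l * Z w).

Definition pos_homogeneous (Omega : Type) (R : realType)
  (S : set (Omega -> R)) (pi : (Omega -> R) -> R) : Prop :=
  forall (l : R) Z, 0 < l -> S Z -> pi (fun w => l * Z w) = l * pi Z.

(* the MARRM eta_R(X) = inf {pi(Z) : Z in S, X/Z in B}, inf of empty = +oo *)
Definition marrm (Omega : Type) (R : realType) (B S : set (Omega -> R))
  (pi : (Omega -> R) -> R) (X : Omega -> R) : \bar R :=
  ereal_inf [set (pi Z)%:E | Z in [set Z | S Z /\ B (fun w => X w / Z w)]].

Definition unit_price (Omega : Type) (R : realType) (S : set (Omega -> R))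
  (pi : (Omega -> R) -> R) : set (Omega -> R) :=
  [set Z | S Z /\ pi Z = 1].

(* Main.v *)
Require Import Defs.
From HB Require Import structures.
From mathcomp Require Import all_boot all_order all_algebra.
From mathcomp Require Import all_classical all_reals all_analysis.
From mathcomp Require Import ring.
Import Order.TTheory GRing.Theory Num.Theory.
Local Open Scope classical_set_scope.
Local Open Scope ring_scope.

Theorem mainTheorem2 (d : measure_display) (Omega : measurableType d)
  (R : realType) (P : probability Omega R)
  (C S K B : set (Omega -> R)) (pi : (Omega -> R) -> R) :
  C !=set0 -> S !=set0 -> K !=set0 ->
  C `<=` @L0pp _ Omega R -> S `<=` @L0pp _ Omega R -> K `<=` @L0pp _ Omega R ->
  setdiv C S `<=` K ->
  (forall Z, S Z -> 0 < pi Z) ->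
  relative_acceptance_set P K B ->
  is_cone S -> pos_homogeneous S pi ->
  (forall X, C X ->
     marrm B S pi X =
     ereal_inf [set l%:E | l in [set l : R | 0 < l /\
                  setmul B (unit_price S pi) (fun w => X w / l)]]) /\
  (forall X Y, setmul B (unit_price S pi) X -> C Y -> ale P Y X ->
     setmul B (unit_price S pi) Y).
Proof.
move=> _ _ _ CL SL KL CSK pipos [_ [_ [_ Bmon]]] cone hom; split.
- move=> X CX; rewrite /marrm; congr ereal_inf.
  apply/seteqP; split => _ [x Hx <-].
  + case: Hx => SZ BXZ.
    have lp := pipos _ SZ.
    exists (pi x) => //; split => //.
    exists (fun w => X w / x w) => //.
    exists (fun w => (pi x)^-1 * x w).
      split; first by apply: cone => //; rewrite invr_gt0.
      by rewrite hom ?invr_gt0 // mulVf // lt0r_neq0.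
    apply/funext => w.
    have := (SL _ SZ).2 w => xw.
    field; apply/andP; split; exact: lt0r_neq0.
  + case: Hx => lp [b Bb [z [Sz piz] E]].
    exists (fun w => x * z w).
      split; first exact: cone.
      have -> : (fun w => X w / (x * z w)) = b => //.
      apply/funext => w.
      have := (SL _ Sz).2 w => zw.
      have := congr1 (fun f => f w) E => /= Ew.
      have -> : X w = x * (b w * z w) by rewrite -Ew; field; exact: lt0r_neq0.
      field; apply/andP; split; exact: lt0r_neq0.
    by rewrite hom // piz mulr1.
- move=> X Y [b Bb [z [Sz piz] ->]] CY YX.
  have zp := (SL _ Sz).2.
  exists (fun w => Y w / z w).
    apply: (Bmon b); first exact: Bb.
      by apply: CSK; exists Y => //; exists z.
    move: YX; apply: filterS => w /= H.
    by rewrite ler_pdivrMr.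
  exists z => //.
  apply/funext => w; rewrite divfK //; exact: lt0r_neq0.
Qed.
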